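(* (i) Let $\psi:\mathbb{Q}_p^n\to\mathbb{C}$ be a negative definite function such that, for every $j\in\mathbb{N}=\{0,1,2,\dots\}$, the function $\xi\mapsto[\psi(\xi)]^j$ is also negative definite. Then $\xi\mapsto e^{\psi(\xi)}$ is negative definite. (ii) Let $c_j\ge 0$ and $\alpha_j\in\mathbb{N}$ ($j\ge1$) be such that the real series $\sum_{j=1}^\infty c_j y^{\alpha_j}$ converges for all $y\ge 0$ and defines a non-constant function, and set $\psi_0(\xi):=\sum_{j=1}^\infty c_j\|\xi\|_p^{\alpha_j}$ for $\xi\in\mathbb{Q}_p^n$. Then for every integer $k\ge1$ the $k$-fold iterated exponential $$\xi\mapsto \underbrace{\exp(\exp(\cdots\exp}_{k\text{ times}}(\psi_0(\xi))\cdots))$$ is a continuous negative definite function on $\mathbb{Q}_p^n$.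
   Context: $p$ is a prime, $\mathbb{Q}_p$ the field of $p$-adic numbers with absolute value $|\cdot|_p$, and for $x=(x_1,\dots,x_n)\in\mathbb{Q}_p^n$, $\|x\|_p:=\max_i|x_i|_p$. A function $\psi:\mathbb{Q}_p^n\to\mathbb{C}$ is negative definite if for all $m\ge1$, all $x_1,\dots,x_m\in\mathbb{Q}_p^n$ and all $\lambda_1,\dots,\lambda_m\in\mathbb{C}$, $\sum_{i=1}^m\sum_{j=1}^m\big(\psi(x_i)+\overline{\psi(x_j)}-\psi(x_i-x_j)\big)\lambda_i\overline{\lambda_j}\ge0.$ *)

(* Defs.v *)
From Stdlib Require Import Reals Lra Lia ZArith Znumtheory ClassicalEpsilon.
From Stdlib Require Fin.
Open Scope R_scope.

Definition Cplx := (R * R)%type.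
Definition C0 : Cplx := (0, 0).
Definition C1 : Cplx := (1, 0).
Definition RtoC (x : R) : Cplx := (x, 0).
Definition Cadd (z w : Cplx) : Cplx := (fst z + fst w, snd z + snd w).
Definition Copp (z : Cplx) : Cplx := (- fst z, - snd z).
Definition Csub (z w : Cplx) : Cplx := Cadd z (Copp w).
Definition Cmul (z w : Cplx) : Cplx :=
  (fst z * fst w - snd z * snd w, fst z * snd w + snd z * fst w).
Definition Cconj (z : Cplx) : Cplx := (fst z, - snd z).
Definition Cexp (z : Cplx) : Cplx := (exp (fst z) * cos (snd z), exp (fst z) * sin (snd z)).
Fixpoint Cpow (z : Cplx) (j : nat) : Cplx :=
  match j with O => C1 | S j' => Cmul z (Cpow z j') end.
Fixpoint Csum (f : nat -> Cplx) (m : nat) : Cplx :=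
  match m with O => C0 | S m' => Cadd (Csum f m') (f m') end.
Definition Cnonneg (z : Cplx) : Prop := snd z = 0 /\ 0 <= fst z.

(* An element x of Q_p is represented by the sequence (r_k)_{k in nat},    *)
(* where r_k is the unique element of Z[1/p] /\ [0, p^k) with              *)
(* x = r_k mod p^k Z_p.  Q_p = lim_k Q_p/p^k Z_p = lim_k Z[1/p]/p^k Z.      *)
Definition is_Qp (p : Z) (r : nat -> R) : Prop :=
  forall k : nat,
    (exists (z : Z) (e : nat), r k * IZR p ^ e = IZR z) /\
    0 <= r k < IZR p ^ k /\
    (exists z : Z, r (S k) - r k = IZR z * IZR p ^ k).

Record Qp (p : Z) := mkQp { qp_seq : nat -> R; qp_ok : is_Qp p qp_seq }.
Arguments mkQp {p}.
Arguments qp_seq {p}.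
Arguments qp_ok {p}.

Definition sub_seq (p : Z) (a b : nat -> R) (k : nat) : R :=
  let d := a k - b k in
  if Rle_dec 0 d then d else d + IZR p ^ k.

Lemma sub_seq_ok (p : Z) (a b : nat -> R) :
  is_Qp p a -> is_Qp p b -> is_Qp p (sub_seq p a b).
Proof.
  intros Ha Hb k.
  destruct (Ha k) as [[za [ea Hea]] [[Ha0 Ha1] [A HA]]].
  destruct (Hb k) as [[zb [eb Heb]] [[Hb0 Hb1] [B HB]]].
  destruct (Ha (S k)) as [_ [[Ha0' Ha1'] _]].
  destruct (Hb (S k)) as [_ [[Hb0' Hb1'] _]].
  unfold sub_seq.
  split; [| split].
  - destruct (Rle_dec 0 (a k - b k)).
    + exists (za * p ^ Z.of_nat eb - zb * p ^ Z.of_nat ea)%Z, (ea + eb)%nat.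
      rewrite minus_IZR, !mult_IZR, <- !pow_IZR, pow_add, <- Hea, <- Heb. ring.
    + exists (za * p ^ Z.of_nat eb - zb * p ^ Z.of_nat ea
              + p ^ Z.of_nat (k + ea + eb))%Z, (ea + eb)%nat.
      rewrite plus_IZR, minus_IZR, !mult_IZR, <- !pow_IZR, !pow_add, <- Hea, <- Heb.
      ring.
  - destruct (Rle_dec 0 (a k - b k)); lra.
  - assert (HP : IZR p ^ S k = IZR p * IZR p ^ k) by reflexivity.
    destruct (Rle_dec 0 (a (S k) - b (S k)));
    destruct (Rle_dec 0 (a k - b k)).
    + exists (A - B)%Z.
      replace (a (S k)) with (a k + IZR A * IZR p ^ k) by lra.
      replace (b (S k)) with (b k + IZR B * IZR p ^ k) by lra.
      rewrite minus_IZR; ring.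
    + exists (A - B - 1)%Z.
      replace (a (S k)) with (a k + IZR A * IZR p ^ k) by lra.
      replace (b (S k)) with (b k + IZR B * IZR p ^ k) by lra.
      rewrite !minus_IZR; ring.
    + exists (A - B + p)%Z. rewrite HP.
      replace (a (S k)) with (a k + IZR A * IZR p ^ k) by lra.
      replace (b (S k)) with (b k + IZR B * IZR p ^ k) by lra.
      rewrite plus_IZR, minus_IZR; ring.
    + exists (A - B + p - 1)%Z. rewrite HP.
      replace (a (S k)) with (a k + IZR A * IZR p ^ k) by lra.
      replace (b (S k)) with (b k + IZR B * IZR p ^ k) by lra.
      rewrite minus_IZR, plus_IZR, minus_IZR; ring.
Qed.

Definition Qp_sub {p : Z} (x y : Qp p) : Qp p :=
  mkQp (sub_seq p (qp_seq x) (qp_seq y)) (sub_seq_ok p _ _ (qp_ok x) (qp_ok y)).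

Definition in_pmZp {p : Z} (x : Qp p) (m : Z) : Prop :=
  forall k : nat, (m <= Z.of_nat k)%Z ->
    exists z : Z, qp_seq x k = IZR z * powerRZ (IZR p) m.

(* p-adic absolute value: the unique t with t = 0 if x = 0 (x in every
   p^m Z_p) and t = p^(-v) where v is the valuation of x otherwise. *)
Definition Qp_abs {p : Z} (x : Qp p) : R :=
  epsilon (inhabits 0%R) (fun t =>
    ((forall m : Z, in_pmZp x m) /\ t = 0) \/
    (exists m : Z, in_pmZp x m /\ ~ in_pmZp x (m + 1) /\ t = powerRZ (IZR p) (- m))).

Definition Qpn (p : Z) (n : nat) := Fin.t n -> Qp p.

Definition Qpn_sub {p : Z} {n : nat} (x y : Qpn p n) : Qpn p n :=
  fun i => Qp_sub (x i) (y i).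

Fixpoint maxF (n : nat) : (Fin.t n -> R) -> R :=
  match n with
  | O => fun _ => 0
  | S n' => fun f => Rmax (f Fin.F1) (maxF n' (fun i => f (Fin.FS i)))
  end.

Definition Qpn_norm {p : Z} {n : nat} (x : Qpn p n) : R :=
  maxF n (fun i => Qp_abs (x i)).

Definition neg_def {p : Z} {n : nat} (psi : Qpn p n -> Cplx) : Prop :=
  forall (m : nat) (x : nat -> Qpn p n) (lam : nat -> Cplx),
    Cnonneg
      (Csum (fun i => Csum (fun j =>
         Cmul (Cmul (Csub (Cadd (psi (x i)) (Cconj (psi (x j))))
                          (psi (Qpn_sub (x i) (x j))))
                    (lam i))
              (Cconj (lam j))) m) m).

Definition Qpn_continuous {p : Z} {n : nat} (f : Qpn p n -> R) : Prop :=
  forall (x : Qpn p n) (eps : R), 0 < eps ->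
    exists delta : R, 0 < delta /\
      forall y : Qpn p n, Qpn_norm (Qpn_sub y x) < delta -> Rabs (f y - f x) < eps.

(* Main.v *)
Require Import Defs.
From Stdlib Require Import Reals ZArith Znumtheory Lra Lia ClassicalEpsilon Classical FunctionalExtensionality.
Open Scope R_scope.

Fixpoint rsum (f : nat -> R) (n : nat) : R :=
  match n with O => 0 | S n' => rsum f n' + f n' end.

Lemma rsum_ext_lt f g n : (forall i, (i < n)%nat -> f i = g i) -> rsum f n = rsum g n.
Proof. induction n; simpl; intros H; auto. rewrite IHn by (intros; apply H; lia). rewrite H by lia; auto. Qed.

Lemma rsum_plus f g n : rsum (fun i => f i + g i) n = rsum f n + rsum g n.
Proof. induction n; simpl; try rewrite IHn; ring. Qed.

Lemma rsum_scal c f n : rsum (fun i => c * f i) n = c * rsum f n.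
Proof. induction n; simpl; try rewrite IHn; ring. Qed.

Lemma rsum_opp f n : rsum (fun i => - f i) n = - rsum f n.
Proof. induction n; simpl; try rewrite IHn; ring. Qed.

Lemma rsum_zero n : rsum (fun _ => 0) n = 0.
Proof. induction n; simpl; try rewrite IHn; ring. Qed.

Lemma rsum_swap (F : nat -> nat -> R) n m :
  rsum (fun i => rsum (fun j => F i j) m) n = rsum (fun j => rsum (fun i => F i j) n) m.
Proof.
  induction n; simpl.
  - rewrite rsum_zero; auto.
  - rewrite IHn. rewrite <- rsum_plus. auto.
Qed.

Lemma rsum_nonneg f n : (forall i, (i < n)%nat -> 0 <= f i) -> 0 <= rsum f n.
Proof. induction n; simpl; intros H; [lra|]. assert (0 <= f n) by (apply H; lia).
  assert (0 <= rsum f n) by (apply IHn; intros; apply H; lia). lra. Qed.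

Lemma fst_Csum f m : fst (Csum f m) = rsum (fun i => fst (f i)) m.
Proof. induction m; simpl; auto. rewrite IHm; auto. Qed.
Lemma snd_Csum f m : snd (Csum f m) = rsum (fun i => snd (f i)) m.
Proof. induction m; simpl; auto. rewrite IHm; auto. Qed.

Lemma rsum_cv (G : nat -> nat -> R) (g : nat -> R) n :
  (forall i, Un_cv (fun N => G N i) (g i)) -> Un_cv (fun N => rsum (G N) n) (rsum g n).
Proof.
  intros H. induction n; simpl.
  - intros eps He. exists O. intros. unfold Rdist. rewrite Rminus_diag, Rabs_R0. lra.
  - apply CV_plus; auto.
Qed.

Lemma cv_const c : Un_cv (fun _ => c) c.
Proof. intros eps He. exists O. intros. unfold Rdist. rewrite Rminus_diag, Rabs_R0. lra. Qed.

Section Forms.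
Context {p : Z} {n : nat}.

Definition kern (g : Qpn p n -> R) (x : nat -> Qpn p n) (i j : nat) : R :=
  g (x i) + g (x j) - g (Qpn_sub (x i) (x j)).

Definition Qw (W : nat -> nat -> R) (m : nat) (x : nat -> Qpn p n) (g : Qpn p n -> R) : R :=
  rsum (fun i => rsum (fun j => kern g x i j * W i j) m) m.

Definition ReL (lam : nat -> Cplx) i j := fst (lam i) * fst (lam j) + snd (lam i) * snd (lam j).
Definition ImL (lam : nat -> Cplx) i j := snd (lam i) * fst (lam j) - fst (lam i) * snd (lam j).

Lemma nd_expr_fst (g : Qpn p n -> R) m x lam :
  fst (Csum (fun i => Csum (fun j =>
         Cmul (Cmul (Csub (Cadd (RtoC (g (x i))) (Cconj (RtoC (g (x j)))))
                          (RtoC (g (Qpn_sub (x i) (x j)))))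
                    (lam i))
              (Cconj (lam j))) m) m) = Qw (ReL lam) m x g.
Proof.
  rewrite fst_Csum. unfold Qw. apply rsum_ext_lt; intros i _.
  rewrite fst_Csum. apply rsum_ext_lt; intros j _.
  unfold kern, ReL, Cmul, Csub, Cadd, Cconj, Copp, RtoC; simpl. ring.
Qed.

Lemma nd_expr_snd (g : Qpn p n -> R) m x lam :
  snd (Csum (fun i => Csum (fun j =>
         Cmul (Cmul (Csub (Cadd (RtoC (g (x i))) (Cconj (RtoC (g (x j)))))
                          (RtoC (g (Qpn_sub (x i) (x j)))))
                    (lam i))
              (Cconj (lam j))) m) m) = Qw (ImL lam) m x g.
Proof.
  rewrite snd_Csum. unfold Qw. apply rsum_ext_lt; intros i _.
  rewrite snd_Csum. apply rsum_ext_lt; intros j _.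
  unfold kern, ImL, Cmul, Csub, Cadd, Cconj, Copp, RtoC; simpl. ring.
Qed.

Lemma neg_def_real (g : Qpn p n -> R) :
  neg_def (fun xi => RtoC (g xi)) <->
  forall m x lam, Qw (ImL lam) m x g = 0 /\ 0 <= Qw (ReL lam) m x g.
Proof.
  unfold neg_def, Cnonneg. split; intros H m x lam; specialize (H m x lam).
  - rewrite nd_expr_fst, nd_expr_snd in H. auto.
  - rewrite nd_expr_fst, nd_expr_snd. auto.
Qed.

Lemma Qw_sum W m x (c : nat -> R) (h : nat -> Qpn p n -> R) N :
  Qw W m x (fun xi => sum_f_R0 (fun k => c k * h k xi) N) =
  sum_f_R0 (fun k => c k * Qw W m x (h k)) N.
Proof.
  induction N; simpl.
  - unfold Qw. rewrite <- rsum_scal. apply rsum_ext_lt; intros i _.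
    rewrite <- rsum_scal. apply rsum_ext_lt; intros j _. unfold kern. ring.
  - rewrite <- IHN. unfold Qw. rewrite <- rsum_scal, <- rsum_plus. apply rsum_ext_lt; intros i _.
    rewrite <- rsum_scal, <- rsum_plus. apply rsum_ext_lt; intros j _. unfold kern. ring.
Qed.

Lemma Qw_cv W m x (G : nat -> Qpn p n -> R) g :
  (forall xi, Un_cv (fun N => G N xi) (g xi)) -> Un_cv (fun N => Qw W m x (G N)) (Qw W m x g).
Proof.
  intros H. unfold Qw. apply rsum_cv. intros i. apply rsum_cv. intros j.
  unfold kern. apply CV_mult; [|apply cv_const].
  apply CV_minus; [apply CV_plus|]; auto.
Qed.

End Forms.


Lemma Qp_ext {p : Z} (a b : Qp p) : (forall k, qp_seq a k = qp_seq b k) -> a = b.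
Proof.
  destruct a as [sa Ha], b as [sb Hb]; simpl; intros H.
  assert (sa = sb) by (apply functional_extensionality; auto). subst.
  f_equal. apply proof_irrelevance.
Qed.

Lemma Qp_sub_self {p : Z} (a b : Qp p) : Qp_sub a a = Qp_sub b b.
Proof.
  apply Qp_ext. intros k. simpl. unfold sub_seq.
  rewrite !Rminus_diag. destruct (Rle_dec 0 0); lra.
Qed.

Lemma Qpn_sub_self {p : Z} {n : nat} (y : Qpn p n) :
  Qpn_sub (Qpn_sub y y) (Qpn_sub y y) = Qpn_sub y y.
Proof.
  apply functional_extensionality. intros i. unfold Qpn_sub. apply Qp_sub_self.
Qed.

Lemma nd_diag {p : Z} {n : nat} (f : Qpn p n -> Cplx) (y : Qpn p n) :
  neg_def f -> 0 <= 2 * fst (f y) - fst (f (Qpn_sub y y)).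
Proof.
  intros H. specialize (H 1%nat (fun _ => y) (fun _ => Defs.C1)).
  destruct H as [_ H]. simpl in H. lra.
Qed.

Lemma Cmul_assoc a b c : Cmul a (Cmul b c) = Cmul (Cmul a b) c.
Proof. destruct a, b, c; unfold Cmul; simpl; f_equal; ring. Qed.
Lemma Cmul_1l a : Cmul Defs.C1 a = a.
Proof. destruct a; unfold Cmul, Defs.C1; simpl; f_equal; ring. Qed.

Lemma Cpow_add z a b : Cpow z (a + b) = Cmul (Cpow z a) (Cpow z b).
Proof.
  induction a; simpl. - rewrite Cmul_1l; auto. - rewrite IHa, Cmul_assoc; auto.
Qed.

Lemma square_real (s : nat -> Cplx) :
  (forall k, s (S k) = Cmul (s k) (s k)) -> (forall k, 0 <= fst (s k)) -> snd (s O) = 0.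
Proof.
  intros Hs Hp.
  set (x := fun k => fst (s k)). set (y := fun k => snd (s k)).
  set (Rk := fun k => x k * x k + y k * y k).
  assert (Hx : forall k, x (S k) = x k * x k - y k * y k)
    by (intros k; unfold x, y; rewrite Hs; unfold Cmul; simpl; ring).
  assert (Hy : forall k, y (S k) = 2 * x k * y k)
    by (intros k; unfold x, y; rewrite Hs; unfold Cmul; simpl; ring).
  assert (HR : forall k, Rk (S k) = Rk k * Rk k)
    by (intros k; unfold Rk; rewrite Hx, Hy; ring).
  destruct (Req_dec (y O) 0) as [|Hne]; [exact H|exfalso].
  assert (HR0 : 0 < Rk O).
  { unfold Rk. assert (0 < y O * y O) by (apply Rsqr_pos_lt; auto). nra. }
  assert (Hpos : forall k, 0 < Rk k).
  { induction k; auto. rewrite HR. nra. }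
  assert (HB : forall k, 2 ^ k * (y O * y O) * Rk k <= y k * y k * Rk O).
  { induction k; simpl. lra.
    rewrite HR, Hy.
    assert (Hxx : y k * y k <= x k * x k) by (specialize (Hp (S k)); change (0 <= x (S k)) in Hp; rewrite Hx in Hp; lra).
    assert (Rk k <= 2 * (x k * x k)) by (unfold Rk; lra).
    assert (0 <= y k * y k) by nra.
    assert (0 <= 2 ^ k * (y O * y O)) by (apply Rmult_le_pos; [apply pow_le; lra| nra]).
    specialize (Hpos k).
    assert (Hm := Rmult_le_compat_l (2 * Rk k) _ _ ltac:(lra) IHk).
    assert (2 * 2 ^ k * (y 0%nat * y 0%nat) * (Rk k * Rk k) <= 2 * Rk k * (y k * y k * Rk 0%nat)).
    { replace (2 * 2 ^ k * (y 0%nat * y 0%nat) * (Rk k * Rk k)) with (2 * Rk k * (2 ^ k * (y 0%nat * y 0%nat) * Rk k)) by ring. exact Hm. }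
    assert (Hm2 := Rmult_le_compat_r (y k * y k * Rk 0%nat) (2 * Rk k) (4 * (x k * x k)) ltac:(nra) ltac:(lra)).
    assert (2 * Rk k * (y k * y k * Rk 0%nat) <= 2 * x k * y k * (2 * x k * y k) * Rk 0%nat).
    { replace (2 * x k * y k * (2 * x k * y k) * Rk 0%nat) with (4 * (x k * x k) * (y k * y k * Rk 0%nat)) by ring. exact Hm2. }
    lra. }
  assert (Hb : forall k, 2 ^ k * (y O * y O) <= Rk O).
  { intros k. specialize (HB k). specialize (Hpos k).
    assert (y k * y k <= Rk k) by (unfold Rk; nra).
    assert (2 ^ k * (y 0%nat * y 0%nat) * Rk k <= Rk 0%nat * Rk k) by nra.
    nra. }
  assert (Hyy : 0 < y O * y O) by (apply Rsqr_pos_lt; auto).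
  destruct (Pow_x_infinity 2 ltac:(rewrite Rabs_pos_eq; lra) (Rk O / (y O * y O) + 1)) as [N HN].
  specialize (HN N (le_n _)). rewrite Rabs_pos_eq in HN by (apply pow_le; lra).
  specialize (Hb N).
  assert (Rk O / (y O * y O) * (y O * y O) = Rk O) by (field; lra).
  nra.
Qed.

Lemma part1 : forall (p : Z) (n : nat) (psi : Qpn p n -> Cplx),
     prime p ->
     neg_def psi ->
     (forall j : nat, neg_def (fun xi => Cpow (psi xi) j)) ->
     neg_def (fun xi => Cexp (psi xi)).
Proof.
  intros p n psi _ H1 Hj.
  assert (Hnn : forall y j, 0 <= fst (Cpow (psi y) j)).
  { intros y j.
    set (z := Qpn_sub y y).
    assert (Hzz : Qpn_sub z z = z) by (unfold z; apply Qpn_sub_self).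
    assert (Hz := nd_diag _ z (Hj j)). rewrite Hzz in Hz.
    assert (Hy := nd_diag _ y (Hj j)). simpl in Hz, Hy. fold z in Hy. lra. }
  assert (Hreal : forall y, snd (psi y) = 0).
  { intros y. set (s := fun k => Cpow (psi y) (2 ^ k)).
    assert (snd (s O) = 0).
    { apply square_real.
      - intros k. unfold s. rewrite Nat.pow_succ_r by lia.
        replace (2 * 2 ^ k)%nat with (2 ^ k + 2 ^ k)%nat by lia. apply Cpow_add.
      - intros k. apply Hnn. }
    unfold s in H. simpl in H. unfold Cmul, Defs.C1 in H; simpl in H. lra. }
  set (g := fun y => fst (psi y)).
  assert (Hpsi : forall y, psi y = RtoC (g y)).
  { intros y. unfold g, RtoC. rewrite <- (Hreal y). destruct (psi y); auto. }
  assert (Hpow : forall j, (fun xi => Cpow (psi xi) j) = (fun xi => RtoC (g xi ^ j))).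
  { intros j. apply functional_extensionality. intros xi. rewrite Hpsi.
    induction j; simpl; auto. rewrite IHj. unfold Cmul, RtoC; simpl. f_equal; ring. }
  assert (Hexp : (fun xi => Cexp (psi xi)) = (fun xi => RtoC (exp (g xi)))).
  { apply functional_extensionality. intros xi. rewrite Hpsi. unfold Cexp, RtoC; simpl.
    rewrite cos_0, sin_0. f_equal; ring. }
  rewrite Hexp. apply neg_def_real. intros m x lam.
  set (G := fun N xi => sum_f_R0 (fun k => / INR (fact k) * g xi ^ k) N).
  assert (Hcv : forall xi, Un_cv (fun N => G N xi) (exp (g xi))).
  { intros xi. unfold G, exp. destruct (exist_exp (g xi)) as [l Hl]. simpl. exact Hl. }
  assert (HQ : forall j W, Qw W m x (fun xi => g xi ^ j) = Qw W m x (fun xi => g xi ^ j)) by auto.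
  assert (Hk : forall k, Qw (ImL lam) m x (fun xi => g xi ^ k) = 0 /\ 0 <= Qw (ReL lam) m x (fun xi => g xi ^ k)).
  { intros k. specialize (Hj k). rewrite Hpow in Hj. apply neg_def_real. exact Hj. }
  split.
  - apply (UL_sequence (fun N => Qw (ImL lam) m x (G N))).
    + apply Qw_cv. exact Hcv.
    + eapply Un_cv_ext; [|apply cv_const]. intros N. simpl. unfold G.
      rewrite (Qw_sum (ImL lam) m x (fun k => / INR (fact k)) (fun k xi => g xi ^ k)).
      symmetry. induction N; cbn [sum_f_R0]; rewrite (proj1 (Hk _)); try rewrite IHN; ring.
  - apply Rle_cv_lim with (Un := fun _ => 0) (Vn := fun N => Qw (ReL lam) m x (G N)); [| apply cv_const | apply Qw_cv; exact Hcv].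
    intros N. unfold G.
    rewrite (Qw_sum (ReL lam) m x (fun k => / INR (fact k)) (fun k xi => g xi ^ k)).
    induction N; cbn [sum_f_R0].
    + apply Rmult_le_pos; [left; apply Rinv_0_lt_compat, lt_0_INR, lt_O_fact | apply Hk].
    + apply Rplus_le_le_0_compat; auto.
      apply Rmult_le_pos; [left; apply Rinv_0_lt_compat, lt_0_INR, lt_O_fact | apply Hk].
Qed.


Section Padic.
Context (p : Z) (Hp : (1 < p)%Z).

Let P := IZR p.
Lemma P_gt1 : 1 < P.
Proof. unfold P. apply IZR_lt. exact Hp. Qed.
Lemma P_neq0 : P <> 0.
Proof. generalize P_gt1. lra. Qed.

Lemma powerRZ_shift (m m' : Z) : (m' <= m)%Z -> exists z : Z, powerRZ P m = IZR z * powerRZ P m'.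
Proof.
  intros H. exists (p ^ Z.of_nat (Z.to_nat (m - m')))%Z.
  rewrite <- pow_IZR. fold P. rewrite pow_powerRZ, <- powerRZ_add by apply P_neq0.
  f_equal. rewrite Z2Nat.id; lia.
Qed.

Lemma powk_split (k : nat) (m : Z) : (m <= Z.of_nat k)%Z -> exists z : Z, P ^ k = IZR z * powerRZ P m.
Proof. intros H. rewrite pow_powerRZ. apply powerRZ_shift; auto. Qed.

Lemma sub_seq_form (a b : nat -> R) k : exists e : Z, sub_seq p a b k = a k - b k + IZR e * P ^ k.
Proof. unfold sub_seq. destruct (Rle_dec 0 (a k - b k)); [exists 0%Z | exists 1%Z]; simpl; unfold P; ring. Qed.

Lemma in_lin (c a b : Qp p) (m s1 s2 : Z) :
  in_pmZp a m -> in_pmZp b m ->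
  (forall k, exists e : Z, qp_seq c k = IZR s1 * qp_seq a k + IZR s2 * qp_seq b k + IZR e * P ^ k) ->
  in_pmZp c m.
Proof.
  intros Ha Hb H k Hk.
  destruct (Ha k Hk) as [za Ea]. destruct (Hb k Hk) as [zb Eb].
  destruct (H k) as [e Ee]. destruct (powk_split k m Hk) as [z Ez].
  exists (s1 * za + s2 * zb + e * z)%Z. rewrite Ee, Ea, Eb, Ez.
  rewrite !plus_IZR, !mult_IZR. unfold P. ring.
Qed.

Lemma in_sub (a b : Qp p) m : in_pmZp a m -> in_pmZp b m -> in_pmZp (Qp_sub a b) m.
Proof.
  intros Ha Hb. apply (in_lin _ a b m 1 (-1)); auto.
  intros k. simpl. destruct (sub_seq_form (qp_seq a) (qp_seq b) k) as [e E].
  exists e. rewrite E. simpl. ring.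
Qed.

Lemma in_ultra (a b c : Qp p) m :
  in_pmZp (Qp_sub a b) m -> in_pmZp (Qp_sub b c) m -> in_pmZp (Qp_sub a c) m.
Proof.
  intros H1 H2. apply (in_lin _ _ _ m 1 1 H1 H2).
  intros k. simpl.
  destruct (sub_seq_form (qp_seq a) (qp_seq c) k) as [e1 E1].
  destruct (sub_seq_form (qp_seq a) (qp_seq b) k) as [e2 E2].
  destruct (sub_seq_form (qp_seq b) (qp_seq c) k) as [e3 E3].
  exists (e1 - e2 - e3)%Z. rewrite E1, E2, E3, !minus_IZR. ring.
Qed.

Lemma in_sym (a b : Qp p) m : in_pmZp (Qp_sub a b) m -> in_pmZp (Qp_sub b a) m.
Proof.
  intros H1. apply (in_lin _ _ _ m (-1) 0 H1 H1).
  intros k. simpl.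
  destruct (sub_seq_form (qp_seq b) (qp_seq a) k) as [e1 E1].
  destruct (sub_seq_form (qp_seq a) (qp_seq b) k) as [e2 E2].
  exists (e1 + e2)%Z. rewrite E1, E2, !plus_IZR. ring.
Qed.

Lemma zero_ok : is_Qp p (fun _ => 0).
Proof.
  intros k. split; [|split].
  - exists 0%Z, O. simpl. ring.
  - split; [lra|]. apply pow_lt. generalize P_gt1; unfold P; lra.
  - exists 0%Z. ring.
Qed.

Definition z0 : Qp p := mkQp (fun _ => 0) zero_ok.

Lemma sub_zero_seq (a : Qp p) k : qp_seq (Qp_sub a z0) k = qp_seq a k.
Proof.
  simpl. unfold sub_seq. destruct (qp_ok a k) as [_ [[H _] _]].
  rewrite Rminus_0_r. destruct (Rle_dec 0 (qp_seq a k)); lra.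
Qed.

Lemma in_self (a : Qp p) m : in_pmZp (Qp_sub a a) m.
Proof.
  intros k Hk. exists 0%Z. simpl. unfold sub_seq. rewrite Rminus_diag.
  destruct (Rle_dec 0 0); lra.
Qed.

Lemma seq_cong (x : Qp p) k d : exists z : Z, qp_seq x (k + d) - qp_seq x k = IZR z * P ^ k.
Proof.
  induction d.
  - exists 0%Z. rewrite Nat.add_0_r. ring.
  - destruct IHd as [z Hz]. destruct (qp_ok x (k + d)%nat) as [_ [_ [z' Hz']]].
    exists (z + z' * p ^ Z.of_nat d)%Z.
    replace (k + S d)%nat with (S (k + d)) by lia.
    rewrite plus_IZR, mult_IZR, <- pow_IZR. fold P. rewrite pow_add in Hz'.
    replace (qp_seq x (S (k + d)) - qp_seq x k) with
      ((qp_seq x (S (k + d)) - qp_seq x (k + d)) + (qp_seq x (k + d) - qp_seq x k)) by ring.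
    rewrite Hz', Hz. unfold P. ring.
Qed.

Lemma in_mono (x : Qp p) m m' : in_pmZp x m -> (m' <= m)%Z -> in_pmZp x m'.
Proof.
  intros H Hm k Hk.
  set (K := Nat.max k (Z.to_nat m)).
  assert (HK : (m <= Z.of_nat K)%Z) by (unfold K; lia).
  destruct (H K HK) as [za Ea].
  destruct (seq_cong x k (K - k)) as [z Ez].
  replace (k + (K - k))%nat with K in Ez by (unfold K; lia).
  destruct (powk_split k m' Hk) as [z1 E1].
  destruct (powerRZ_shift m m' Hm) as [z2 E2].
  exists (za * z2 - z * z1)%Z. fold P in Ea |- *.
  replace (qp_seq x k) with (qp_seq x K - IZR z * P ^ k) by lra.
  rewrite Ea, E1, E2, minus_IZR, !mult_IZR. ring.
Qed.

Lemma in_exists (x : Qp p) : exists m, in_pmZp x m.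
Proof.
  destruct (qp_ok x O) as [[z0' [e He]] _].
  exists (- Z.of_nat e)%Z. intros k _.
  destruct (seq_cong x O k) as [z Ez]. simpl in Ez.
  assert (Hinv : P ^ e * powerRZ P (- Z.of_nat e) = 1).
  { rewrite pow_powerRZ, <- powerRZ_add by apply P_neq0. rewrite Z.add_opp_diag_r. reflexivity. }
  exists (z0' + z * p ^ Z.of_nat e)%Z.
  rewrite plus_IZR, mult_IZR, <- pow_IZR. fold P. fold P in He.
  replace (qp_seq x k) with (qp_seq x O * (P ^ e * powerRZ P (- Z.of_nat e)) + IZR z * 1) by (rewrite Hinv; lra).
  rewrite <- Hinv. rewrite <- Rmult_assoc, He. ring.
Qed.

Definition aspec (x : Qp p) (t : R) : Prop :=
    ((forall m : Z, in_pmZp x m) /\ t = 0) \/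
    (exists m : Z, in_pmZp x m /\ ~ in_pmZp x (m + 1) /\ t = powerRZ (IZR p) (- m)).

Lemma aspec_exists (x : Qp p) : exists t, aspec x t.
Proof.
  destruct (classic (forall m, in_pmZp x m)) as [H|H].
  - exists 0. left; auto.
  - apply not_all_ex_not in H. destruct H as [m1 Hm1].
    destruct (in_exists x) as [m0 Hm0].
    assert (Hlt : (m0 < m1)%Z).
    { destruct (Z_lt_le_dec m0 m1); auto. exfalso. apply Hm1. eapply in_mono; eauto. }
    assert (Hgen : forall d : nat, forall m, in_pmZp x m -> ~ in_pmZp x (m + Z.of_nat d) ->
              exists m', in_pmZp x m' /\ ~ in_pmZp x (m' + 1)).
    { induction d; intros m H1 H2.
      - exfalso. apply H2. rewrite Z.add_0_r. auto.
      - destruct (classic (in_pmZp x (m + 1))) as [H3|H3].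
        + apply (IHd (m + 1)%Z); auto. replace (m + 1 + Z.of_nat d)%Z with (m + Z.of_nat (S d))%Z by lia. auto.
        + exists m; auto. }
    destruct (Hgen (Z.to_nat (m1 - m0)) m0 Hm0) as [m' [H1 H2]].
    + rewrite Z2Nat.id by lia. replace (m0 + (m1 - m0))%Z with m1 by lia. auto.
    + exists (powerRZ (IZR p) (- m')). right. exists m'. auto.
Qed.

Lemma aspec_unique (x : Qp p) t1 t2 : aspec x t1 -> aspec x t2 -> t1 = t2.
Proof.
  intros [[H1 E1]|[m1 [H1 [N1 E1]]]] [[H2 E2]|[m2 [H2 [N2 E2]]]].
  - congruence.
  - exfalso. apply N2. auto.
  - exfalso. apply N1. auto.
  - subst. assert (m1 = m2).
    { destruct (Z.lt_trichotomy m1 m2) as [Hl|[Hl|Hl]]; auto; exfalso.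
      - apply N1. apply (in_mono x m2); [exact H2|lia].
      - apply N2. apply (in_mono x m1); [exact H1|lia]. }
    subst. auto.
Qed.

Lemma aspec_abs (x : Qp p) : aspec x (Qp_abs x).
Proof. unfold Qp_abs. apply epsilon_spec. apply aspec_exists. Qed.

Lemma abs_ext (a b : Qp p) : (forall m, in_pmZp a m <-> in_pmZp b m) -> Qp_abs a = Qp_abs b.
Proof.
  intros H. apply (aspec_unique b); [|apply aspec_abs].
  destruct (aspec_abs a) as [[H1 E1]|[m1 [H1 [N1 E1]]]].
  - left. split; auto. intros m. apply H; auto.
  - right. exists m1. rewrite <- !H. auto.
Qed.

Lemma abs_nonneg (x : Qp p) : 0 <= Qp_abs x.
Proof.
  destruct (aspec_abs x) as [[H1 E1]|[m1 [H1 [N1 E1]]]]; rewrite E1; [lra|].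
  apply powerRZ_le. generalize P_gt1; unfold P; lra.
Qed.

Lemma powerRZ_mono (a b : Z) : (a <= b)%Z -> powerRZ P a <= powerRZ P b.
Proof.
  intros H. destruct (powerRZ_shift b a H) as [z Ez].
  replace b with (a + Z.of_nat (Z.to_nat (b - a)))%Z by (rewrite Z2Nat.id; lia).
  rewrite powerRZ_add by apply P_neq0. rewrite <- pow_powerRZ.
  assert (0 < powerRZ P a) by (apply powerRZ_lt; generalize P_gt1; lra).
  assert (1 <= P ^ Z.to_nat (b - a)) by (apply pow_R1_Rle; generalize P_gt1; lra).
  nra.
Qed.

Lemma in_abs_le (x : Qp p) m : in_pmZp x m -> Qp_abs x <= powerRZ P (- m).
Proof.
  intros H. destruct (aspec_abs x) as [[H1 E1]|[m1 [H1 [N1 E1]]]]; rewrite E1.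
  - apply powerRZ_le. generalize P_gt1; lra.
  - apply powerRZ_mono. destruct (Z_le_gt_dec m m1); [lia|].
    exfalso. apply N1. apply (in_mono x m); [exact H|lia].
Qed.

Lemma abs_ultra (a b c : Qp p) :
  Qp_abs (Qp_sub a c) <= Rmax (Qp_abs (Qp_sub a b)) (Qp_abs (Qp_sub b c)).
Proof.
  destruct (aspec_abs (Qp_sub a b)) as [[H1 E1]|[m1 [H1 [N1 E1]]]];
  destruct (aspec_abs (Qp_sub b c)) as [[H2 E2]|[m2 [H2 [N2 E2]]]].
  - destruct (aspec_abs (Qp_sub a c)) as [[H3 E3]|[m3 [H3 [N3 E3]]]].
    + rewrite E1, E2, E3. unfold Rmax; destruct Rle_dec; lra.
    + exfalso. apply N3. apply (in_ultra a b c); auto.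
  - rewrite E2. eapply Rle_trans; [|apply Rmax_r]. apply in_abs_le. apply (in_ultra a b c); auto.
  - rewrite E1. eapply Rle_trans; [|apply Rmax_l]. apply in_abs_le. apply (in_ultra a b c); auto.
  - rewrite E1, E2. set (m := Z.min m1 m2).
    assert (in_pmZp (Qp_sub a c) m).
    { apply (in_ultra a b c); eapply in_mono; eauto; unfold m; lia. }
    eapply Rle_trans; [apply in_abs_le; eauto|].
    unfold m. destruct (Z.min_spec m1 m2) as [[_ E]|[_ E]]; rewrite E; fold P.
    + apply Rmax_l.
    + apply Rmax_r.
Qed.

Lemma abs_sym (a b : Qp p) : Qp_abs (Qp_sub a b) = Qp_abs (Qp_sub b a).
Proof. apply abs_ext. intros m; split; apply in_sym. Qed.

Lemma abs_sub_zero (a : Qp p) : Qp_abs (Qp_sub a z0) = Qp_abs a.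
Proof.
  apply abs_ext. intros m; split; intros H k Hk; destruct (H k Hk) as [z Ez]; exists z;
  rewrite <- Ez; rewrite sub_zero_seq; auto.
Qed.

End Padic.


Lemma maxF_nonneg n f : 0 <= maxF n f.
Proof.
  revert f; induction n; intros f; simpl; [lra|].
  eapply Rle_trans; [apply IHn|apply Rmax_r].
Qed.

Lemma maxF_ge n f (i : Fin.t n) : f i <= maxF n f.
Proof.
  revert f i; induction n; intros f i.
  - inversion i.
  - apply (Fin.caseS' i (fun i => f i <= maxF (S n) f)); simpl.
    + apply Rmax_l.
    + intros j. eapply Rle_trans; [apply (IHn (fun i => f (Fin.FS i)) j)|apply Rmax_r].
Qed.

Lemma maxF_le n f M : 0 <= M -> (forall i, f i <= M) -> maxF n f <= M.
Proof.
  revert f; induction n; intros f HM H; simpl; auto.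
  apply Rmax_lub; auto.
Qed.

Section Norm.
Context (p : Z) (Hp : (1 < p)%Z) (n : nat).

Definition Zn : Qpn p n := fun _ => z0 p Hp.

Lemma norm_nonneg (x : Qpn p n) : 0 <= Qpn_norm x.
Proof. apply maxF_nonneg. Qed.

Lemma norm_ultra (a b c : Qpn p n) :
  Qpn_norm (Qpn_sub a c) <= Rmax (Qpn_norm (Qpn_sub a b)) (Qpn_norm (Qpn_sub b c)).
Proof.
  apply maxF_le.
  - eapply Rle_trans; [apply norm_nonneg|apply Rmax_l].
  - intros i. unfold Qpn_sub at 1.
    eapply Rle_trans; [apply (abs_ultra p Hp (a i) (b i) (c i))|].
    apply Rmax_lub.
    + eapply Rle_trans; [|apply Rmax_l]. apply (maxF_ge n (fun i => Qp_abs (Qpn_sub a b i)) i).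
    + eapply Rle_trans; [|apply Rmax_r]. apply (maxF_ge n (fun i => Qp_abs (Qpn_sub b c i)) i).
Qed.

Lemma norm_sym (a b : Qpn p n) : Qpn_norm (Qpn_sub a b) = Qpn_norm (Qpn_sub b a).
Proof.
  unfold Qpn_norm. f_equal. apply functional_extensionality. intros i.
  unfold Qpn_sub. apply abs_sym; auto.
Qed.

Lemma norm_zero (a : Qpn p n) : Qpn_norm (Qpn_sub a Zn) = Qpn_norm a.
Proof.
  unfold Qpn_norm. f_equal. apply functional_extensionality. intros i.
  unfold Qpn_sub, Zn. apply abs_sub_zero.
Qed.

End Norm.


Definition Form (M : nat) (K : nat -> nat -> R) (w : nat -> R) : R :=
  rsum (fun a => rsum (fun b => K a b * w a * w b) M) M.

Definition Kf (E : nat -> nat -> R) (D : nat -> R) (a b : nat) : R :=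
  if Nat.eq_dec a b then D a else E a b.

Definition skip (b i : nat) : nat := if (i <? b)%nat then i else S i.

Lemma rsum_skip f b n : (b <= n)%nat -> rsum f (S n) = rsum (fun i => f (skip b i)) n + f b.
Proof.
  revert b; induction n; intros b Hb.
  - assert (b = O) by lia. subst. simpl. ring.
  - destruct (Nat.eq_dec b (S n)).
    + subst. change (rsum f (S (S n))) with (rsum f (S n) + f (S n)). f_equal.
      apply rsum_ext_lt. intros i Hi. unfold skip. destruct (Nat.ltb_spec i (S n)); auto; lia.
    + change (rsum f (S (S n))) with (rsum f (S n) + f (S n)).
      rewrite (IHn b) by lia. simpl.
      assert (skip b n = S n) by (unfold skip; destruct (Nat.ltb_spec n b); lia).
      rewrite H. ring.
Qed.

Definition sigl (b L i : nat) : nat := if (i <? L)%nat then skip b i else b.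

Lemma sig_lt b L i : (b <= L)%nat -> (i < S L)%nat -> (sigl b L i < S L)%nat.
Proof. intros. unfold sigl, skip. destruct (Nat.ltb_spec i L); [destruct (Nat.ltb_spec i b)|]; lia. Qed.

Lemma sig_inj b L i j : (b <= L)%nat -> (i < S L)%nat -> (j < S L)%nat -> sigl b L i = sigl b L j -> i = j.
Proof.
  intros. unfold sigl, skip in *.
  destruct (Nat.ltb_spec i L); destruct (Nat.ltb_spec j L);
  try destruct (Nat.ltb_spec i b); try destruct (Nat.ltb_spec j b); lia.
Qed.

Lemma sig_L b L : sigl b L L = b.
Proof. unfold sigl. destruct (Nat.ltb_spec L L); lia. Qed.

Lemma rsum_sig f b L : (b <= L)%nat -> rsum f (S L) = rsum (fun i => f (sigl b L i)) (S L).
Proof.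
  intros Hb. rewrite (rsum_skip f b L Hb). simpl. rewrite sig_L. f_equal.
  apply rsum_ext_lt. intros i Hi. unfold sigl. destruct (Nat.ltb_spec i L); auto; lia.
Qed.

Lemma rsum_delta_mul a n t g : (a < n)%nat ->
  rsum (fun i => (if Nat.eq_dec i a then t else 0) * g i) n = t * g a.
Proof.
  induction n; intros H; [lia|]. simpl.
  destruct (Nat.eq_dec n a).
  - subst. rewrite (rsum_ext_lt _ (fun _ => 0)). rewrite rsum_zero. ring.
    intros i Hi. destruct (Nat.eq_dec i a); [lia|ring].
  - rewrite IHn by lia. ring.
Qed.

Lemma rsum_delta a n t : (a < n)%nat -> rsum (fun i => if Nat.eq_dec i a then t else 0) n = t.
Proof.
  intros H. rewrite (rsum_ext_lt _ (fun i => (if Nat.eq_dec i a then t else 0) * 1)).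
  rewrite rsum_delta_mul; auto; ring. intros; ring.
Qed.

Lemma argmin1 (f : nat -> R) N : (0 < N)%nat -> exists c, (c < N)%nat /\ forall j, (j < N)%nat -> f c <= f j.
Proof.
  induction N; intros H; [lia|]. destruct N.
  - exists O. split; auto. intros j Hj. assert (j = O) by lia. subst; lra.
  - destruct IHN as [c [Hc Hm]]; [lia|].
    destruct (Rle_dec (f c) (f (S N))).
    + exists c. split; [lia|]. intros j Hj. destruct (Nat.eq_dec j (S N)); [subst; auto|apply Hm; lia].
    + exists (S N). split; [lia|]. intros j Hj. destruct (Nat.eq_dec j (S N)); [subst; lra|].
      specialize (Hm j ltac:(lia)). lra.
Qed.

Lemma minpair (E : nat -> nat -> R) M : (forall a b, E a b = E b a) -> (2 <= M)%nat ->
  exists a b, (a < M)%nat /\ (b < M)%nat /\ a <> b /\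
    forall i j, (i < M)%nat -> (j < M)%nat -> i <> j -> E a b <= E i j.
Proof.
  intros HS. induction M; intros H; [lia|]. destruct (Nat.eq_dec M 1).
  - subst. exists O, 1%nat. split; [lia|split; [lia|split; [lia|]]].
    intros i j Hi Hj Hij. assert ((i = 0 /\ j = 1) \/ (i = 1 /\ j = 0))%nat as [[]|[]] by lia; subst.
    + lra. + rewrite HS; lra.
  - destruct IHM as [a [b [Ha [Hb [Hab Hm]]]]]; [lia|].
    destruct (argmin1 (fun c => E M c) M) as [c [Hc Hcm]]; [lia|].
    destruct (Rle_dec (E a b) (E M c)).
    + exists a, b. split; [lia|split; [lia|split; auto]].
      intros i j Hi Hj Hij.
      destruct (Nat.eq_dec i M); [subst; specialize (Hcm j ltac:(lia)); simpl in Hcm; lra|].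
      destruct (Nat.eq_dec j M); [subst; specialize (Hcm i ltac:(lia)); simpl in Hcm; rewrite (HS i M); lra|].
      apply Hm; lia.
    + exists M, c. split; [lia|split; [lia|split; [lia|]]].
      intros i j Hi Hj Hij.
      destruct (Nat.eq_dec i M); [subst; apply (Hcm j); lia|].
      destruct (Nat.eq_dec j M); [subst; rewrite (HS i M); apply (Hcm i); lia|].
      specialize (Hm i j ltac:(lia) ltac:(lia) Hij). lra.
Qed.

Lemma Form_split K w n : (forall a b, K a b = K b a) ->
  Form (S n) K w = Form n K w + 2 * w n * rsum (fun b => K n b * w b) n + K n n * w n * w n.
Proof.
  intros HS. unfold Form. simpl.
  rewrite rsum_plus.
  rewrite (rsum_ext_lt (fun a => K a n * w a * w n) (fun a => w n * (K n a * w a))) by (intros; rewrite HS; ring).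
  rewrite (rsum_ext_lt (fun b => K n b * w n * w b) (fun b => w n * (K n b * w b))) by (intros; ring).
  rewrite !rsum_scal. ring.
Qed.

Lemma Form_ext_lt K1 K2 w1 w2 n :
  (forall a b, (a < n)%nat -> (b < n)%nat -> K1 a b * w1 a * w1 b = K2 a b * w2 a * w2 b) ->
  Form n K1 w1 = Form n K2 w2.
Proof.
  intros H. unfold Form. apply rsum_ext_lt; intros a Ha. apply rsum_ext_lt; intros b Hb. auto.
Qed.

Lemma Form_delta_w K w n a t : (a < n)%nat -> (forall i j, K i j = K j i) ->
  Form n K (fun i => w i + (if Nat.eq_dec i a then t else 0)) =
  Form n K w + 2 * t * rsum (fun j => K a j * w j) n + t * t * K a a.
Proof.
  intros Ha HS. unfold Form.
  set (d := fun i => if Nat.eq_dec i a then t else 0).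
  transitivity (rsum (fun i => rsum (fun j => K i j * w i * w j) n + d i * rsum (fun j => K i j * w j) n
                 + w i * (t * K i a) + d i * (t * K i a)) n).
  - apply rsum_ext_lt. intros i Hi.
    rewrite (rsum_ext_lt _ (fun j => (K i j * w i * w j + d i * (K i j * w j)) +
        ((if Nat.eq_dec j a then t else 0) * (w i * K i j) + (if Nat.eq_dec j a then t else 0) * (d i * K i j)))).
    + rewrite !rsum_plus, rsum_scal, !rsum_delta_mul by auto. ring.
    + intros j Hj. unfold d. ring.
  - rewrite !rsum_plus. unfold d at 1. rewrite rsum_delta_mul by auto.
    unfold d. rewrite rsum_delta_mul by auto.
    rewrite (rsum_ext_lt (fun i => w i * (t * K i a)) (fun i => t * (K a i * w i))) by (intros; rewrite HS; ring).
    rewrite rsum_scal. ring.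
Qed.

Lemma Form_delta_K K w n a c : (a < n)%nat ->
  Form n (fun i j => K i j + (if Nat.eq_dec i a then if Nat.eq_dec j a then c else 0 else 0)) w =
  Form n K w + c * w a * w a.
Proof.
  intros Ha. unfold Form.
  rewrite (rsum_ext_lt _ (fun i => rsum (fun j => K i j * w i * w j) n +
                                   (if Nat.eq_dec i a then c * w a * w a else 0))).
  - rewrite rsum_plus, rsum_delta by auto. ring.
  - intros i Hi. destruct (Nat.eq_dec i a).
    + subst. rewrite <- (rsum_delta a n (c * w a * w a)) by auto. rewrite <- rsum_plus.
      apply rsum_ext_lt. intros j Hj. destruct (Nat.eq_dec j a); [subst|]; ring.
    + rewrite Rplus_0_r. apply rsum_ext_lt. intros; ring.
Qed.


Lemma Kf_sym E D : (forall a b, E a b = E b a) -> forall a b, Kf E D a b = Kf E D b a.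
Proof. intros HS a b. unfold Kf. destruct (Nat.eq_dec a b), (Nat.eq_dec b a); subst; auto; lia. Qed.

Theorem cnd : forall M (E : nat -> nat -> R) (D w : nat -> R),
  (forall a b, E a b = E b a) ->
  (forall a b c, E a c <= Rmax (E a b) (E b c)) ->
  (forall a c, (a < M)%nat -> (c < M)%nat -> a <> c -> D a <= E a c) ->
  rsum w M = 0 ->
  Form M (Kf E D) w <= 0.
Proof.
  induction M; intros E D w HS HU HD Hw.
  - unfold Form; simpl; lra.
  - destruct M as [|n].
    + simpl in Hw. unfold Form; simpl. assert (w O = 0) by lra. rewrite H. lra.
    + set (L := S n) in *.
      destruct (minpair E (S L) HS ltac:(unfold L; lia)) as [a0 [b0 [Ha0 [Hb0 [Hab Hmin]]]]].
      assert (Hb0L : (b0 <= L)%nat) by lia.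
      set (s := sigl b0 L).
      set (E' := fun i j => E (s i) (s j)).
      set (D' := fun i => D (s i)).
      set (w' := fun i => w (s i)).
      assert (Hslt : forall i, (i < S L)%nat -> (s i < S L)%nat) by (intros; apply sig_lt; auto).
      assert (Hsinj : forall i j, (i < S L)%nat -> (j < S L)%nat -> s i = s j -> i = j)
        by (intros i j Hi Hj Hij; exact (sig_inj b0 L i j Hb0L Hi Hj Hij)).
      assert (HA : Form (S L) (Kf E D) w = Form (S L) (Kf E' D') w').
      { unfold Form. rewrite (rsum_sig _ b0 L Hb0L). apply rsum_ext_lt. intros a Ha.
        rewrite (rsum_sig _ b0 L Hb0L). apply rsum_ext_lt. intros b Hb.
        unfold Kf, E', D', w'. fold s.
        destruct (Nat.eq_dec (s a) (s b)), (Nat.eq_dec a b); subst; auto.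
        all: exfalso; apply n0; auto. }
      set (a1 := if (a0 <? b0)%nat then a0 else (a0 - 1)%nat).
      assert (Ha1 : (a1 < L)%nat /\ s a1 = a0).
      { unfold a1, s, sigl, skip. destruct (Nat.ltb_spec a0 b0).
        - destruct (Nat.ltb_spec a0 L); [|lia]. destruct (Nat.ltb_spec a0 b0); [|lia]. split; auto; lia.
        - destruct (Nat.ltb_spec (a0 - 1) L); [|lia]. destruct (Nat.ltb_spec (a0 - 1) b0); [lia|]. split; lia. }
      destruct Ha1 as [Ha1L Hsa1]. clearbody a1.
      assert (HsL : s L = b0) by apply sig_L.
      set (delta := E' a1 L).
      assert (Hdelta : delta = E a0 b0) by (unfold delta, E'; rewrite Hsa1, HsL; auto).
      assert (Hmin' : forall i j, (i < S L)%nat -> (j < S L)%nat -> i <> j -> delta <= E' i j).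
      { intros i j Hi Hj Hij. rewrite Hdelta. unfold E'. apply Hmin; auto;
        intros Hc; apply Hij; apply Hsinj; auto. }
      assert (HS' : forall a b, E' a b = E' b a) by (intros; unfold E'; auto).
      assert (HD' : forall a c, (a < S L)%nat -> (c < S L)%nat -> a <> c -> D' a <= E' a c).
      { intros a c Ha Hc Hac. unfold D', E'. apply HD; auto; intros Hh; apply Hac; apply Hsinj; auto. }
      set (w'' := fun i => w' i + (if Nat.eq_dec i a1 then w' L else 0)).
      set (D'' := fun i => if Nat.eq_dec i a1 then delta else D' i).
      assert (IH : Form L (Kf E' D'') w'' <= 0).
      { apply IHM.
        - auto.
        - intros; unfold E'; auto.
        - intros a c Ha Hc Hac. unfold D''. destruct (Nat.eq_dec a a1).
          + rewrite e. apply Hmin'; lia.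
          + apply HD'; auto; lia.
        - unfold w''. rewrite rsum_plus, rsum_delta by auto.
          assert (rsum w' (S L) = 0).
          { unfold w', s. rewrite <- (rsum_sig w b0 L Hb0L). exact Hw. }
          simpl in H. exact H. }
      set (K' := Kf E' D').
      assert (HK'S : forall a b, K' a b = K' b a) by (apply Kf_sym; auto).
      assert (HK'' : Form L (Kf E' D'') w'' = Form L K' w'' + (delta - D' a1) * w'' a1 * w'' a1).
      { rewrite <- Form_delta_K by auto. apply Form_ext_lt. intros a b Ha Hb.
        unfold K', Kf, D''. destruct (Nat.eq_dec a a1), (Nat.eq_dec b a1), (Nat.eq_dec a b); try subst a; try subst b; try lia; ring. }
      assert (Hw''a1 : w'' a1 = w' a1 + w' L) by (unfold w''; destruct (Nat.eq_dec a1 a1); [ring|lia]).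
      assert (HK'w : Form L K' w'' = Form L K' w' + 2 * w' L * rsum (fun j => K' a1 j * w' j) L + w' L * w' L * K' a1 a1).
      { unfold w''. apply Form_delta_w; auto. }
      assert (Hrow : rsum (fun b => K' L b * w' b) L = rsum (fun j => K' a1 j * w' j) L + (delta - D' a1) * w' a1).
      { rewrite <- (rsum_delta_mul a1 L (delta - D' a1) w') by auto. rewrite <- rsum_plus.
        apply rsum_ext_lt. intros j Hj. unfold K', Kf.
        destruct (Nat.eq_dec L j); [lia|]. destruct (Nat.eq_dec a1 j), (Nat.eq_dec j a1); try subst j; try lia.
        - unfold delta. rewrite HS'. ring.
        - assert (H1 : E' L j = E' a1 j).
          { assert (Hx1 := HU (s a1) (s L) (s j)). assert (Hx2 := HU (s L) (s a1) (s j)).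
            assert (delta <= E' L j) by (apply Hmin'; lia).
            assert (delta <= E' a1 j) by (apply Hmin'; lia).
            unfold E' in *. unfold delta, E' in *.
            rewrite (HS (s L) (s a1)) in Hx2.
            unfold Rmax in Hx1, Hx2. destruct Rle_dec, Rle_dec; lra. }
          rewrite H1. ring. }
      assert (HK'LL : K' L L = D' L) by (unfold K', Kf; destruct (Nat.eq_dec L L); [auto|lia]).
      assert (HK'aa : K' a1 a1 = D' a1) by (unfold K', Kf; destruct (Nat.eq_dec a1 a1); [auto|lia]).
      assert (HDL : D' L <= delta) by (unfold delta; rewrite HS'; apply HD'; lia).
      assert (HDa : D' a1 <= delta) by (apply HD'; lia).
      rewrite HA. fold K'. rewrite (Form_split K' w' L HK'S). rewrite Hrow, HK'LL.
      rewrite HK'', HK'w, Hw''a1, HK'aa in IH.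
      assert (0 <= w' L * w' L) by nra. assert (0 <= w' a1 * w' a1) by nra.
      assert ((D' L - delta) * (w' L * w' L) <= 0) by nra.
      assert ((D' a1 - delta) * (w' a1 * w' a1) <= 0) by nra.
      nra.
Qed.


Section Radial.
Context (p : Z) (Hp : (1 < p)%Z) (n : nat) (H : R -> R)
  (Hmono : forall a b, 0 <= a -> a <= b -> H a <= H b) (H0 : 0 <= H 0).

Let g := fun xi : Qpn p n => H (Qpn_norm xi).

Lemma H_ultra (a b c : Qpn p n) :
  g (Qpn_sub a c) <= Rmax (g (Qpn_sub a b)) (g (Qpn_sub b c)).
Proof.
  unfold g. assert (U := norm_ultra p Hp n a b c).
  assert (0 <= Qpn_norm (Qpn_sub a c)) by apply norm_nonneg.
  unfold Rmax in *. destruct (Rle_dec (Qpn_norm (Qpn_sub a b)) (Qpn_norm (Qpn_sub b c))),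
    (Rle_dec (H (Qpn_norm (Qpn_sub a b))) (H (Qpn_norm (Qpn_sub b c)))).
  - apply Hmono; auto.
  - exfalso. match goal with h : ~ _ |- _ => apply h end. apply Hmono; auto. apply norm_nonneg.
  - eapply Rle_trans; [apply Hmono; [|exact U]; auto|]. auto.
  - apply Hmono; auto.
Qed.

Lemma Qform_nonneg (m : nat) (x : nat -> Qpn p n) (u : nat -> R) :
  0 <= rsum (fun i => rsum (fun j => kern g x i j * (u i * u j)) m) m.
Proof.
  set (y := fun a => if (a <? m)%nat then x a else Zn p Hp n).
  set (E := fun a b => g (Qpn_sub (y a) (y b))).
  set (D := fun a => E a a).
  set (s := rsum u m).
  set (w := fun a => if (a <? m)%nat then u a else - s).
  assert (HS : forall a b, E a b = E b a) by (intros; unfold E, g; rewrite norm_sym; auto).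
  assert (HC := cnd (S m) E D w HS).
  assert (HF : Form (S m) (Kf E D) w <= 0).
  { apply HC.
    - intros a b c. apply H_ultra.
    - intros a c _ _ _. unfold D. eapply Rle_trans; [apply (H_ultra _ (y c))|].
      unfold g. rewrite (norm_sym p Hp n (y c) (y a)). apply Rmax_lub; apply Rle_refl.
    - simpl. unfold w. rewrite (rsum_ext_lt _ u).
      + destruct (Nat.ltb_spec m m); [lia|]. unfold s; ring.
      + intros i Hi. destruct (Nat.ltb_spec i m); [auto|lia]. }
  rewrite (Form_ext_lt (Kf E D) E w w) in HF by (intros; unfold Kf, D; destruct Nat.eq_dec; [subst|]; auto).
  rewrite Form_split in HF by auto.
  assert (Hwm : w m = - s) by (unfold w; destruct (Nat.ltb_spec m m); [lia|auto]).
  set (T := rsum (fun i => g (x i) * u i) m).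
  assert (HT : rsum (fun b => E m b * w b) m = T).
  { apply rsum_ext_lt. intros b Hb. unfold E, w, y.
    destruct (Nat.ltb_spec m m); [lia|]. destruct (Nat.ltb_spec b m); [|lia].
    unfold g. rewrite norm_sym, norm_zero; auto. }
  assert (HFm : Form m E w = rsum (fun i => rsum (fun j => g (Qpn_sub (x i) (x j)) * u i * u j) m) m).
  { apply Form_ext_lt. intros a b Ha Hb. unfold E, w, y.
    destruct (Nat.ltb_spec a m); [|lia]. destruct (Nat.ltb_spec b m); [|lia]. auto. }
  assert (HEmm : 0 <= E m m).
  { unfold E, g. eapply Rle_trans; [exact H0|]. apply Hmono; [lra|apply norm_nonneg]. }
  rewrite HT, HFm, Hwm in HF.
  assert (Hexp : rsum (fun i => rsum (fun j => kern g x i j * (u i * u j)) m) m =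
      2 * s * T - rsum (fun i => rsum (fun j => g (Qpn_sub (x i) (x j)) * u i * u j) m) m).
  { transitivity (rsum (fun i => g (x i) * u i * s + u i * T - rsum (fun j => g (Qpn_sub (x i) (x j)) * u i * u j) m) m).
    - apply rsum_ext_lt. intros i Hi.
      assert (Hm : forall A B C : nat -> R, rsum (fun j => A j + B j - C j) m = rsum A m + rsum B m - rsum C m).
      { intros A B C. unfold Rminus. rewrite rsum_plus, rsum_plus, rsum_opp. auto. }
      rewrite (rsum_ext_lt _ (fun j => (g (x i) * u i) * u j + u i * (g (x j) * u j) - g (Qpn_sub (x i) (x j)) * u i * u j))
        by (intros; unfold kern; ring).
      rewrite Hm, !rsum_scal. fold s T. auto.
    - unfold Rminus. rewrite !rsum_plus, rsum_opp.
      rewrite (rsum_ext_lt (fun i => g (x i) * u i * s) (fun i => s * (g (x i) * u i))) by (intros; ring).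
      rewrite (rsum_ext_lt (fun i => u i * T) (fun i => T * u i)) by (intros; ring).
      rewrite !rsum_scal. fold T s. ring. }
  rewrite Hexp.
  assert (0 <= E m m * (- s) * (- s)) by (rewrite Rmult_assoc; apply Rmult_le_pos; nra).
  lra.
Qed.

Lemma radial_nd : neg_def (fun xi : Qpn p n => RtoC (H (Qpn_norm xi))).
Proof.
  apply (neg_def_real (fun xi => H (Qpn_norm xi))). intros m x lam. split.
  - set (S := Qw (ImL lam) m x (fun xi => H (Qpn_norm xi))).
    assert (S = - S).
    { unfold S, Qw. rewrite rsum_swap at 1. rewrite <- rsum_opp. apply rsum_ext_lt. intros j _.
      rewrite <- rsum_opp. apply rsum_ext_lt. intros i _.
      unfold kern, ImL. rewrite (norm_sym p Hp n (x i) (x j)). ring. }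
    lra.
  - unfold Qw.
    rewrite (rsum_ext_lt _ (fun i => rsum (fun j => kern g x i j * (fst (lam i) * fst (lam j))) m +
                                    rsum (fun j => kern g x i j * (snd (lam i) * snd (lam j))) m)).
    + rewrite rsum_plus. apply Rplus_le_le_0_compat; apply Qform_nonneg.
    + intros i _. rewrite <- rsum_plus. apply rsum_ext_lt. intros j _. unfold ReL. fold g. ring.
Qed.

End Radial.


Lemma iter_exp_mono k a b : a <= b -> Nat.iter k exp a <= Nat.iter k exp b.
Proof.
  induction k; simpl; intros H; auto.
  specialize (IHk H). destruct (Rle_lt_or_eq_dec _ _ IHk) as [Hl|He].
  - left. apply exp_increasing; auto.
  - rewrite He; lra.
Qed.

Lemma iter_exp_cont k : continuity (Nat.iter k exp).
Proof.
  induction k.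
  - exact (derivable_continuous id derivable_id).
  - exact (continuity_comp (Nat.iter k exp) exp IHk (derivable_continuous exp derivable_exp)).
Qed.

Lemma part2 : forall (p : Z) (n : nat) (c : nat -> R) (alpha : nat -> nat) (F : R -> R),
     prime p ->
     (forall j : nat, (1 <= j)%nat -> 0 <= c j) ->
     (forall y : R, 0 <= y ->
        infinite_sum (fun j => c (S j) * y ^ alpha (S j)) (F y)) ->
     (exists y1 y2 : R, 0 <= y1 /\ 0 <= y2 /\ F y1 <> F y2) ->
     forall k : nat, (1 <= k)%nat ->
       let psi0 := fun xi : Qpn p n => F (Qpn_norm xi) in
       let f := fun xi : Qpn p n => Nat.iter k exp (psi0 xi) in
       Qpn_continuous f /\ neg_def (fun xi => RtoC (f xi)).
Proof.
  intros p n c alpha F Hpr Hc HF _ k Hk psi0 f.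
  assert (Hp : (1 < p)%Z) by (destruct Hpr; auto).
  set (Sp := fun y N => sum_f_R0 (fun j => c (S j) * y ^ alpha (S j)) N).
  assert (HS : forall y, 0 <= y -> Un_cv (Sp y) (F y)) by (intros; apply HF; auto).
  assert (Fmono : forall a b, 0 <= a -> a <= b -> F a <= F b).
  { intros a b Ha Hab. apply Rle_cv_lim with (Un := Sp a) (Vn := Sp b); [|apply HS; lra|apply HS; lra].
    intros N. unfold Sp. apply sum_Rle. intros j _.
    apply Rmult_le_compat_l; [apply Hc; lia|]. apply pow_incr; lra. }
  set (Hf := fun y => Nat.iter k exp (F y)).
  assert (Hmono : forall a b, 0 <= a -> a <= b -> Hf a <= Hf b).
  { intros. unfold Hf. apply iter_exp_mono. apply Fmono; auto. }
  assert (H0 : 0 <= Hf 0).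
  { unfold Hf. destruct k; [lia|]. simpl. left; apply exp_pos. }
  split.
  -
    set (C := F 1 - F 0).
    assert (HC0 : 0 <= C) by (unfold C; assert (F 0 <= F 1) by (apply Fmono; lra); lra).
    assert (Fcont : forall y, 0 <= y <= 1 -> F y - F 0 <= y * C).
    { intros y Hy.
      apply Rle_cv_lim with (Un := fun N => Sp y N - Sp 0 N) (Vn := fun N => y * (Sp 1 N - Sp 0 N)).
      - intros N. unfold Sp. rewrite <- !minus_sum, scal_sum. apply sum_Rle. intros j _.
        assert (0 <= c (Datatypes.S j)) by (apply Hc; lia).
        destruct (alpha (Datatypes.S j)) as [|a].
        + simpl. lra.
        + simpl. rewrite pow1.
          assert (y ^ a <= 1) by (rewrite <- (pow1 a); apply pow_incr; lra).
          assert (0 <= y ^ a) by (apply pow_le; lra).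
          assert (y * y ^ a <= y) by nra. nra.
      - apply CV_minus; apply HS; lra.
      - unfold C. apply CV_mult; [apply cv_const|apply CV_minus; apply HS; lra]. }
    assert (Hrc : forall eps, 0 < eps -> exists d, 0 < d /\ forall t, 0 <= t < d -> Rabs (Hf t - Hf 0) < eps).
    { intros eps He.
      destruct (iter_exp_cont k (F 0) eps He) as [alp [Halp Hal]].
      exists (Rmin 1 (alp / (C + 1))). split.
      - apply Rmin_pos; [lra|]. apply Rdiv_lt_0_compat; lra.
      - intros t [Ht0 Ht].
        assert (Ht1 : t <= 1) by (generalize (Rmin_l 1 (alp / (C + 1))); lra).
        assert (Ht2 : t < alp / (C + 1)) by (generalize (Rmin_r 1 (alp / (C + 1))); lra).
        assert (F 0 <= F t) by (apply Fmono; lra).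
        assert (F t - F 0 <= t * C) by (apply Fcont; lra).
        assert (t * (C + 1) < alp).
        { apply (Rmult_lt_compat_r (C + 1)) in Ht2; [|lra].
          unfold Rdiv in Ht2. rewrite Rmult_assoc, Rinv_l in Ht2 by lra. lra. }
        unfold Hf. destruct (Req_dec (F t) (F 0)) as [E|E].
        + rewrite E, Rminus_diag, Rabs_R0. exact He.
        + apply (Hal (F t)). split.
          * split; [exact I| auto].
          * simpl. unfold Rdist. rewrite Rabs_pos_eq by lra. nra. }
    intros x eps He.
    assert (Hnx := norm_nonneg p n x).
    assert (Hzx := norm_zero p Hp n x).
    destruct (Rle_lt_or_eq_dec _ _ Hnx) as [Hpos|Hz].
    + exists (Qpn_norm x). split; auto. intros y Hy.
      assert (Hzy := norm_zero p Hp n y).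
      assert (U1 := norm_ultra p Hp n y x (Zn p Hp n)).
      assert (U2 := norm_ultra p Hp n x y (Zn p Hp n)).
      rewrite Hzx, Hzy in *. rewrite (norm_sym p Hp n x y) in U2.
      assert (Qpn_norm y = Qpn_norm x).
      { unfold Rmax in U1, U2. destruct Rle_dec in U1; destruct Rle_dec in U2; lra. }
      unfold f, psi0. rewrite H. rewrite Rminus_diag, Rabs_R0. exact He.
    + destruct (Hrc eps He) as [d [Hd Hdd]].
      exists d. split; auto. intros y Hy.
      assert (Hzy := norm_zero p Hp n y).
      assert (U1 := norm_ultra p Hp n y x (Zn p Hp n)).
      rewrite Hzx, Hzy, <- Hz in U1.
      assert (Hny := norm_nonneg p n y). assert (Hnyx := norm_nonneg p n (Qpn_sub y x)).
      assert (Qpn_norm y < d).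
      { unfold Rmax in U1. destruct Rle_dec in U1; lra. }
      change (Rabs (Hf (Qpn_norm y) - Hf (Qpn_norm x)) < eps).
      rewrite <- Hz. apply Hdd. lra.
  - exact (radial_nd p Hp n Hf Hmono H0).
Qed.

Theorem lemma3p1 :
  (* (i) *)
  (forall (p : Z) (n : nat) (psi : Qpn p n -> Cplx),
     prime p ->
     neg_def psi ->
     (forall j : nat, neg_def (fun xi => Cpow (psi xi) j)) ->
     neg_def (fun xi => Cexp (psi xi)))
  /\
  (* (ii) *)
  (forall (p : Z) (n : nat) (c : nat -> R) (alpha : nat -> nat) (F : R -> R),
     prime p ->
     (forall j : nat, (1 <= j)%nat -> 0 <= c j) ->
     (forall y : R, 0 <= y ->
        infinite_sum (fun j => c (S j) * y ^ alpha (S j)) (F y)) ->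
     (exists y1 y2 : R, 0 <= y1 /\ 0 <= y2 /\ F y1 <> F y2) ->
     forall k : nat, (1 <= k)%nat ->
       let psi0 := fun xi : Qpn p n => F (Qpn_norm xi) in
       let f := fun xi : Qpn p n => Nat.iter k exp (psi0 xi) in
       Qpn_continuous f /\ neg_def (fun xi => RtoC (f xi))).
Proof.
  split.
  - exact part1.
  - exact part2.
Qed.
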